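(* Consider a planar motion of oriented m-triangles in the $xy$-plane with normal vector $\mathbf k$ and angular momentum $\mathbf\Omega=\Omega\mathbf k$, and let $\omega_i=\dot\phi_i$ be the scalar angular velocity of the position vector $\mathbf a_i$ (where $\phi_i$ is its polar angle in the plane). Then, at nondegenerate configurations, $$\omega_i=\omega_i^0+\frac{\Omega}{I},\qquad i=1,2,3,$$ where (with indices mod $3$) $$\omega_1^0=\frac1I\big(I_3\dot\alpha_2-I_2\dot\alpha_3\big)=\frac{1}{8m_1m_2m_3\Delta I}\Big[(C_3I_3-C_2I_2)\frac{\dot I_1}{I_1}-(C_1+2m_2I_3)\dot I_2+(C_1+2m_3I_2)\dot I_3\Big],$$ and $\omega_2^0,\omega_3^0$ are obtained by cyclic permutation of the indices.
   Context: Masses $m_1,m_2,m_3>0$, $m_1+m_2+m_3=1$; position vectors $\mathbf a_i$ with $\sum m_i\mathbf a_i=0$ (center of mass at the origin $O$), vertices $P_i$ with $\mathbf a_i=\overrightarrow{OP_i}$. $I_i=m_i|\mathbf a_i|^2$, $I=I_1+I_2+I_3$. $\alpha_j$ is the central angle at $O$ opposite to the vertex $P_j$ (the angle between $\mathbf a_{j+1}$ and $\mathbf a_{j+2}$), so $\alpha_1+\alpha_2+\alpha_3=2\pi$. $\Delta$ is the area of the triangle $P_1P_2P_3$. $C_1=-m_1I_1+m_2I_2+m_3I_3$, and $C_2,C_3$ by cyclic permutation. The angular momentum is $\mathbf\Omega=\sum m_i\mathbf a_i\times\dot{\mathbf a}_i$. *)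

(* Defs.v *)
From Stdlib Require Export Reals.
From Coquelicot Require Export Coquelicot.
Open Scope R_scope.

(* Bodies are indexed 0,1,2 (paper: 1,2,3); indices are taken mod 3. *)
Definition nx (i : nat) : nat := ((i + 1) mod 3)%nat.
Definition px (i : nat) : nat := ((i + 2) mod 3)%nat.

(* A planar motion: position a_i(s) = (x i s, y i s) in the xy-plane. *)

Definition sqn (x y : nat -> R -> R) (i : nat) (s : R) : R :=
  x i s ^ 2 + y i s ^ 2.

Definition Imom (m : nat -> R) (x y : nat -> R -> R) (i : nat) (s : R) : R :=
  m i * sqn x y i s.

Definition Itot (m : nat -> R) (x y : nat -> R -> R) (s : R) : R :=
  Imom m x y 0 s + Imom m x y 1 s + Imom m x y 2 s.

Definition Cc (m : nat -> R) (x y : nat -> R -> R) (i : nat) (s : R) : R :=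
  - m i * Imom m x y i s + m (nx i) * Imom m x y (nx i) s
    + m (px i) * Imom m x y (px i) s.

Definition alpha (x y : nat -> R -> R) (j : nat) (s : R) : R :=
  acos ((x (nx j) s * x (px j) s + y (nx j) s * y (px j) s)
        / (sqrt (sqn x y (nx j) s) * sqrt (sqn x y (px j) s))).

(* Signed area of the triangle P_1 P_2 P_3 (positive iff counterclockwise). *)
Definition area (x y : nat -> R -> R) (s : R) : R :=
  ((x 1%nat s - x 0%nat s) * (y 2%nat s - y 0%nat s)
   - (y 1%nat s - y 0%nat s) * (x 2%nat s - x 0%nat s)) / 2.

Definition angmom (m : nat -> R) (x y : nat -> R -> R) (s : R) : R :=
  m 0%nat * (x 0%nat s * Derive (y 0%nat) s - y 0%nat s * Derive (x 0%nat) s)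
  + m 1%nat * (x 1%nat s * Derive (y 1%nat) s - y 1%nat s * Derive (x 1%nat) s)
  + m 2%nat * (x 2%nat s * Derive (y 2%nat) s - y 2%nat s * Derive (x 2%nat) s).

(* Main.v *)
Require Import Defs.
From Stdlib Require Import Lra Lia Field.
Lemma alpha_deriv (x y : nat->R->R) (a b : nat) t :
 ex_derive (x a) t -> ex_derive (x b) t -> ex_derive (y a) t -> ex_derive (y b) t ->
 0 < sqn x y a t -> 0 < sqn x y b t -> 0 < x a t * y b t - y a t * x b t ->
 is_derive (fun s => acos ((x a s * x b s + y a s * y b s)/(sqrt (sqn x y a s) * sqrt (sqn x y b s)))) t
   ((x b t * Derive (y b) t - y b t * Derive (x b) t)/sqn x y b t - (x a t * Derive (y a) t - y a t * Derive (x a) t)/sqn x y a t).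
Proof.
intros Hxa Hxb Hya Hyb Ha Hb Hc.
unfold sqn in *.
set (g := fun s => (x a s * x b s + y a s * y b s)/(sqrt (x a s ^ 2 + y a s ^ 2) * sqrt (x b s ^ 2 + y b s ^ 2))).
evar (dg : R).
assert (Hg : is_derive g t dg).
{ unfold g. auto_derive. 2: { subst dg. reflexivity. }
  repeat split; auto. apply Rmult_integral_contrapositive_currified; apply Rgt_not_eq, sqrt_lt_R0; nra. }
set (xa := x a t) in *. set (xb := x b t) in *. set (ya := y a t) in *. set (yb := y b t) in *.
change (Derive (fun x0 : R => x a x0) t) with (Derive (x a) t) in dg.
change (Derive (fun x0 : R => x b x0) t) with (Derive (x b) t) in dg.
change (Derive (fun x0 : R => y a x0) t) with (Derive (y a) t) in dg.
change (Derive (fun x0 : R => y b x0) t) with (Derive (y b) t) in dg.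
set (ua := Derive (x a) t) in *. set (ub := Derive (x b) t) in *.
set (va := Derive (y a) t) in *. set (vb := Derive (y b) t) in *.
replace (xa * (xa * 1) + ya * (ya * 1)) with (xa^2+ya^2) in dg by ring.
replace (xb * (xb * 1) + yb * (yb * 1)) with (xb^2+yb^2) in dg by ring.
set (sa := sqrt (xa^2+ya^2)) in *. set (sb := sqrt (xb^2+yb^2)) in *.
assert (Hsa : sa * sa = xa^2+ya^2) by (apply sqrt_sqrt; lra).
assert (Hsb : sb * sb = xb^2+yb^2) by (apply sqrt_sqrt; lra).
assert (Psa : 0 < sa) by (apply sqrt_lt_R0; lra).
assert (Psb : 0 < sb) by (apply sqrt_lt_R0; lra).
assert (Hgt : g t = (xa*xb+ya*yb)/(sa*sb)) by reflexivity.
assert (H1g : 1 - (g t)² = ((xa*yb-ya*xb)/(sa*sb))²).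
{ rewrite Hgt. unfold Rsqr. field_simplify; [| lra | lra].
  replace (sa^4) with ((sa*sa)^2) by ring. replace (sb^4) with ((sb*sb)^2) by ring.
  replace (sa^2) with (sa*sa) by ring. replace (sb^2) with (sb*sb) by ring.
  rewrite Hsa, Hsb. field. split; lra. }
assert (Hpos : 0 < (xa*yb-ya*xb)/(sa*sb)) by (apply Rdiv_lt_0_compat; nra).
assert (Hsq : sqrt (1 - (g t)²) = (xa*yb-ya*xb)/(sa*sb)) by (rewrite H1g; apply sqrt_Rsqr; lra).
assert (Hrange : -1 < g t < 1).
{ assert (0 < 1 - (g t)²) by (rewrite H1g; unfold Rsqr; nra). unfold Rsqr in *. split; nra. }
assert (Hac : is_derive acos (g t) (-1 / sqrt (1 - (g t)²))).
{ apply is_derive_Reals. rewrite <- (derive_pt_acos _ Hrange). apply derive_pt_eq_1 with (derivable_pt_acos _ Hrange). reflexivity. }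
pose proof (is_derive_comp _ _ _ _ _ Hac Hg) as Hd.
unfold g in Hd. fold xa xb ya yb in Hd.
assert (Hcr : 0 < xa*yb - ya*xb) by exact Hc.
replace ((xb * vb - yb * ub) / (xb ^ 2 + yb ^ 2) - (xa * va - ya * ua) / (xa ^ 2 + ya ^ 2))
  with (scal dg (-1 / sqrt (1 - (g t)²))); [exact Hd|].
rewrite Hsq. unfold scal; simpl; unfold mult; simpl. subst dg.
replace (xa * (xa * 1) + ya * (ya * 1)) with (xa^2+ya^2) by ring.
replace (xb * (xb * 1) + yb * (yb * 1)) with (xb^2+yb^2) by ring.
fold sa sb.
transitivity (-((ua*xb+xa*ub+va*yb+ya*vb) - (xa*xb+ya*yb)*((xa*ua+ya*va)/(sa*sa) + (xb*ub+yb*vb)/(sb*sb)))/(xa*yb-ya*xb)).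
{ field. repeat split; lra. }
rewrite Hsa, Hsb. field. repeat split; lra.
Qed.

Lemma phi_deriv (x y phi : nat -> R -> R) (i : nat) (t : R) :
  ex_derive (x i) t -> ex_derive (y i) t -> ex_derive (phi i) t ->
  (forall s, x i s = sqrt (sqn x y i s) * cos (phi i s) /\
             y i s = sqrt (sqn x y i s) * sin (phi i s)) ->
  0 < sqn x y i t ->
  Derive (phi i) t = (x i t * Derive (y i) t - y i t * Derive (x i) t) / sqn x y i t.
Proof.
intros Hx Hy Hp Hphi Hr.
assert (Z : forall s:R, x i s * sin (phi i s) - y i s * cos (phi i s) = 0).
{ intro s. destruct (Hphi s) as [E1 E2]. rewrite E1 at 1. rewrite E2 at 1. ring. }
assert (H0 : is_derive (fun s => x i s * sin (phi i s) - y i s * cos (phi i s)) t 0).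
{ apply is_derive_ext with (fun _ => 0).
  - intro s. symmetry. apply Z.
  - auto_derive; auto. }
assert (H1 : is_derive (fun s => x i s * sin (phi i s) - y i s * cos (phi i s)) t
   (Derive (x i) t * sin (phi i t) + x i t * (cos (phi i t) * Derive (phi i) t)
    - (Derive (y i) t * cos (phi i t) - y i t * (sin (phi i t) * Derive (phi i) t)))).
{ auto_derive; auto. change (Derive (fun x0 : R => x i x0) t) with (Derive (x i) t). change (Derive (fun x0 : R => y i x0) t) with (Derive (y i) t). change (Derive (fun x0 : R => phi i x0) t) with (Derive (phi i) t). ring. }
pose proof (is_derive_unique _ _ _ H0) as U0.
pose proof (is_derive_unique _ _ _ H1) as U1.
rewrite U0 in U1.
destruct (Hphi t) as [E1 E2].
set (r := sqrt (sqn x y i t)) in *.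
assert (Pr : 0 < r) by (apply sqrt_lt_R0; lra).
assert (Hrr : r * r = sqn x y i t) by (apply sqrt_sqrt; lra).
rewrite <- Hrr. rewrite E1, E2 in U1 |- *.
set (c := cos (phi i t)) in *. set (sn := sin (phi i t)) in *.
assert (Hcs : sn*sn + c*c = 1) by (unfold sn, c; pose proof (sin2_cos2 (phi i t)); unfold Rsqr in *; lra).
set (p := Derive (phi i) t) in *.
assert (K1 : r*p = r*p*(sn*sn+c*c)) by (rewrite Hcs; ring).
assert (K2 : r*p = Derive (y i) t * c - Derive (x i) t * sn) by lra.
apply Rmult_eq_reg_l with r; [|lra].
rewrite K2. field. lra.
Qed.

Lemma key (m0 m1 m2 x0 y0 x1 y1 x2 y2 u0 v0 u1 v1 u2 v2 A I : R) :
  0 < m0 -> 0 < m1 -> 0 < m2 -> m0+m1+m2 = 1 ->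
  m0*x0+m1*x1+m2*x2 = 0 -> m0*y0+m1*y1+m2*y2 = 0 ->
  m0*u0+m1*u1+m2*u2 = 0 -> m0*v0+m1*v1+m2*v2 = 0 ->
  0 < x0^2+y0^2 -> 0 < x1^2+y1^2 -> 0 < x2^2+y2^2 ->
  A = ((x1 - x0) * (y2 - y0) - (y1 - y0) * (x2 - x0)) / 2 -> 0 < A ->
  I = m0*(x0^2+y0^2) + m1*(x1^2+y1^2) + m2*(x2^2+y2^2) ->
  (m2*(x2^2+y2^2)*((x0*v0-y0*u0)/(x0^2+y0^2) - (x2*v2-y2*u2)/(x2^2+y2^2))
   - m1*(x1^2+y1^2)*((x1*v1-y1*u1)/(x1^2+y1^2) - (x0*v0-y0*u0)/(x0^2+y0^2)))/I =
   1/(8*m0*m1*m2*A*I) *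
    (((-m2*(m2*(x2^2+y2^2))+m0*(m0*(x0^2+y0^2))+m1*(m1*(x1^2+y1^2)))*(m2*(x2^2+y2^2))
      - (-m1*(m1*(x1^2+y1^2))+m2*(m2*(x2^2+y2^2))+m0*(m0*(x0^2+y0^2)))*(m1*(x1^2+y1^2)))
      *((2*m0*(x0*u0+y0*v0))/(m0*(x0^2+y0^2)))
     - ((-m0*(m0*(x0^2+y0^2))+m1*(m1*(x1^2+y1^2))+m2*(m2*(x2^2+y2^2))) + 2*m1*(m2*(x2^2+y2^2)))*(2*m1*(x1*u1+y1*v1))
     + ((-m0*(m0*(x0^2+y0^2))+m1*(m1*(x1^2+y1^2))+m2*(m2*(x2^2+y2^2))) + 2*m2*(m1*(x1^2+y1^2)))*(2*m2*(x2*u2+y2*v2))).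
Proof.
intros Pm0 Pm1 Pm2 Hs Hx Hy Hu Hv R0 R1 R2 HA PA HI.
assert (PI : 0 < I) by (rewrite HI; pose proof (Rmult_lt_0_compat _ _ Pm0 R0); pose proof (Rmult_lt_0_compat _ _ Pm1 R1); pose proof (Rmult_lt_0_compat _ _ Pm2 R2); lra).
assert (Ex : x2 = -(m0*x0+m1*x1)/m2) by (apply Rmult_eq_reg_l with m2; [field_simplify; lra|lra]).
assert (Ey : y2 = -(m0*y0+m1*y1)/m2) by (apply Rmult_eq_reg_l with m2; [field_simplify; lra|lra]).
assert (Eu : u2 = -(m0*u0+m1*u1)/m2) by (apply Rmult_eq_reg_l with m2; [field_simplify; lra|lra]).
assert (Ev : v2 = -(m0*v0+m1*v1)/m2) by (apply Rmult_eq_reg_l with m2; [field_simplify; lra|lra]).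
assert (N1 : x2^2+y2^2 <> 0) by lra.
assert (N2 : A <> 0) by lra.
assert (N3 : I <> 0) by lra.
subst x2 y2 u2 v2.
rewrite HA in N2 |- *. rewrite HI in N3 |- *.
assert (Em : m2 = 1 - m0 - m1) by lra. subst m2.
assert (P2 : 1 - m0 - m1 <> 0) by lra.
field. repeat split; try lra.
- intro Hc; apply N3; apply (Rmult_eq_reg_r (1-m0-m1)); [|lra]; rewrite Rmult_0_l; rewrite <- Hc; field; lra.
- intro Hc; apply N2; apply (Rmult_eq_reg_r (2*(1-m0-m1))); [|lra]; rewrite Rmult_0_l; rewrite <- Hc; field; lra.
- intro Hc; apply N1; apply (Rmult_eq_reg_r ((1-m0-m1)^2)); [|apply pow_nonzero; lra]; rewrite Rmult_0_l; rewrite <- Hc; field; lra.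
Qed.

Lemma cross_lem (m0 m1 m2 x0 y0 x1 y1 x2 y2 : R) :
  0 < m2 -> m0+m1+m2 = 1 ->
  m0*x0+m1*x1+m2*x2 = 0 -> m0*y0+m1*y1+m2*y2 = 0 ->
  let A := ((x1 - x0) * (y2 - y0) - (y1 - y0) * (x2 - x0)) / 2 in
  x1*y2 - y1*x2 = 2*m0*A /\ x2*y0 - y2*x0 = 2*m1*A /\ x0*y1 - y0*x1 = 2*m2*A.
Proof.
intros Pm2 Hs Hx Hy A. subst A.
assert (Ex : x2 = -(m0*x0+m1*x1)/m2) by (apply Rmult_eq_reg_l with m2; [field_simplify; lra|lra]).
assert (Ey : y2 = -(m0*y0+m1*y1)/m2) by (apply Rmult_eq_reg_l with m2; [field_simplify; lra|lra]).
subst x2 y2.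
assert (Em : m2 = 1 - m0 - m1) by lra. subst m2.
repeat split; field; lra.
Qed.


Lemma nx0 : nx 0 = 1%nat. Proof. reflexivity. Qed.
Lemma nx1 : nx 1 = 2%nat. Proof. reflexivity. Qed.
Lemma nx2 : nx 2 = 0%nat. Proof. reflexivity. Qed.
Lemma px0 : px 0 = 2%nat. Proof. reflexivity. Qed.
Lemma px1 : px 1 = 0%nat. Proof. reflexivity. Qed.
Lemma px2 : px 2 = 1%nat. Proof. reflexivity. Qed.

Theorem theoremC1
  (m : nat -> R) (x y phi : nat -> R -> R) (t : R)
  (Hm_pos : forall i, (i < 3)%nat -> 0 < m i)
  (Hm_sum : m 0%nat + m 1%nat + m 2%nat = 1)
  (Hcom_x : forall s, m 0%nat * x 0%nat s + m 1%nat * x 1%nat s + m 2%nat * x 2%nat s = 0)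
  (Hcom_y : forall s, m 0%nat * y 0%nat s + m 1%nat * y 1%nat s + m 2%nat * y 2%nat s = 0)
  (Hdx : forall i s, (i < 3)%nat -> ex_derive (x i) s)
  (Hdy : forall i s, (i < 3)%nat -> ex_derive (y i) s)
  (Hphi : forall i s, (i < 3)%nat ->
     x i s = sqrt (sqn x y i s) * cos (phi i s) /\
     y i s = sqrt (sqn x y i s) * sin (phi i s))
  (Hdphi : forall i s, (i < 3)%nat -> ex_derive (phi i) s)
  (Hnondeg : 0 < area x y t) :
  forall i, (i < 3)%nat ->
    let I := Itot m x y t in
    let Om := angmom m x y t in
    let Ii k := Imom m x y k t in
    let dI k := Derive (fun s => Imom m x y k s) t in
    let da k := Derive (fun s => alpha x y k s) t in
    let C k := Cc m x y k t in
    let j := nx i in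
    let k := px i in
    let w0 := (Ii k * da j - Ii j * da k) / I in
    Derive (phi i) t = w0 + Om / I /\
    w0 = 1 / (8 * m 0%nat * m 1%nat * m 2%nat * area x y t * I) *
         ((C k * Ii k - C j * Ii j) * (dI i / Ii i)
          - (C i + 2 * m j * Ii k) * dI j
          + (C i + 2 * m k * Ii j) * dI k).
Proof.

intros i Hi.
assert (Pm0 := Hm_pos 0%nat ltac:(lia)).
assert (Pm1 := Hm_pos 1%nat ltac:(lia)).
assert (Pm2 := Hm_pos 2%nat ltac:(lia)).
destruct (cross_lem (m 0%nat) (m 1%nat) (m 2%nat) (x 0%nat t) (y 0%nat t) (x 1%nat t) (y 1%nat t) (x 2%nat t) (y 2%nat t) Pm2 Hm_sum (Hcom_x t) (Hcom_y t)) as [Cr0 [Cr1 Cr2]].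
assert (HA : area x y t = ((x 1%nat t - x 0%nat t) * (y 2%nat t - y 0%nat t) - (y 1%nat t - y 0%nat t) * (x 2%nat t - x 0%nat t)) / 2) by reflexivity.
rewrite <- HA in Cr0, Cr1, Cr2.
assert (Q0 : 0 < x 1%nat t * y 2%nat t - y 1%nat t * x 2%nat t) by (rewrite Cr0; nra).
assert (Q1 : 0 < x 2%nat t * y 0%nat t - y 2%nat t * x 0%nat t) by (rewrite Cr1; nra).
assert (Q2 : 0 < x 0%nat t * y 1%nat t - y 0%nat t * x 1%nat t) by (rewrite Cr2; nra).
assert (Hcross : forall j, (j < 3)%nat -> 0 < x (nx j) t * y (px j) t - y (nx j) t * x (px j) t).
{ intros j Hj. destruct j as [|[|[|j]]]; [exact Q0|exact Q1|exact Q2|lia]. }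
assert (Hr : forall q, (q < 3)%nat -> 0 < sqn x y q t).
{ intros q Hq. unfold sqn.
  destruct (Rle_lt_or_eq_dec 0 (x q t ^ 2 + y q t ^ 2)) as [H|H]; [nra|exact H|].
  exfalso. assert (Ex : x q t = 0) by nra. assert (Ey : y q t = 0) by nra.
  destruct q as [|[|[|q]]]; [rewrite Ex, Ey in Q2|rewrite Ex, Ey in Q0|rewrite Ex, Ey in Q1|lia]; lra. }
assert (Hw : forall q, (q < 3)%nat -> Derive (phi q) t = (x q t * Derive (y q) t - y q t * Derive (x q) t) / sqn x y q t).
{ intros q Hq. apply phi_deriv; auto. }
assert (HdI : forall q, (q < 3)%nat -> Derive (fun s => Imom m x y q s) t = 2 * m q * (x q t * Derive (x q) t + y q t * Derive (y q) t)).
{ intros q Hq. apply is_derive_unique. unfold Imom, sqn. auto_derive.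
  - split; [apply Hdx; auto|split; [apply Hdy; auto|auto]].
  - change (Derive (fun x0 : R => x q x0) t) with (Derive (x q) t).
    change (Derive (fun x0 : R => y q x0) t) with (Derive (y q) t). ring. }
assert (Hda : forall j, (j < 3)%nat -> Derive (fun s => alpha x y j s) t =
   (x (px j) t * Derive (y (px j)) t - y (px j) t * Derive (x (px j)) t) / sqn x y (px j) t
   - (x (nx j) t * Derive (y (nx j)) t - y (nx j) t * Derive (x (nx j)) t) / sqn x y (nx j) t).
{ intros j Hj. apply is_derive_unique. unfold alpha.
  assert (Hn : (nx j < 3)%nat) by (unfold nx; apply Nat.mod_upper_bound; lia).
  assert (Hp : (px j < 3)%nat) by (unfold px; apply Nat.mod_upper_bound; lia).
  apply alpha_deriv; auto. }
assert (Hu : m 0%nat * Derive (x 0%nat) t + m 1%nat * Derive (x 1%nat) t + m 2%nat * Derive (x 2%nat) t = 0).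
{ assert (D : is_derive (fun s => m 0%nat * x 0%nat s + m 1%nat * x 1%nat s + m 2%nat * x 2%nat s) t
      (m 0%nat * Derive (x 0%nat) t + m 1%nat * Derive (x 1%nat) t + m 2%nat * Derive (x 2%nat) t)).
  { auto_derive. - repeat split; apply Hdx; lia.
    - change (Derive (fun x0 : R => x 0%nat x0) t) with (Derive (x 0%nat) t).
      change (Derive (fun x0 : R => x 1%nat x0) t) with (Derive (x 1%nat) t).
      change (Derive (fun x0 : R => x 2%nat x0) t) with (Derive (x 2%nat) t). ring. }
  assert (D0 : is_derive (fun s => m 0%nat * x 0%nat s + m 1%nat * x 1%nat s + m 2%nat * x 2%nat s) t 0).
  { apply is_derive_ext with (fun _ => 0). - intro s. symmetry. apply Hcom_x. - auto_derive; auto. }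
  rewrite <- (is_derive_unique _ _ _ D), (is_derive_unique _ _ _ D0). reflexivity. }
assert (Hv : m 0%nat * Derive (y 0%nat) t + m 1%nat * Derive (y 1%nat) t + m 2%nat * Derive (y 2%nat) t = 0).
{ assert (D : is_derive (fun s => m 0%nat * y 0%nat s + m 1%nat * y 1%nat s + m 2%nat * y 2%nat s) t
      (m 0%nat * Derive (y 0%nat) t + m 1%nat * Derive (y 1%nat) t + m 2%nat * Derive (y 2%nat) t)).
  { auto_derive. - repeat split; apply Hdy; lia.
    - change (Derive (fun x0 : R => y 0%nat x0) t) with (Derive (y 0%nat) t).
      change (Derive (fun x0 : R => y 1%nat x0) t) with (Derive (y 1%nat) t).
      change (Derive (fun x0 : R => y 2%nat x0) t) with (Derive (y 2%nat) t). ring. }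
  assert (D0 : is_derive (fun s => m 0%nat * y 0%nat s + m 1%nat * y 1%nat s + m 2%nat * y 2%nat s) t 0).
  { apply is_derive_ext with (fun _ => 0). - intro s. symmetry. apply Hcom_y. - auto_derive; auto. }
  rewrite <- (is_derive_unique _ _ _ D), (is_derive_unique _ _ _ D0). reflexivity. }
assert (R0 := Hr 0%nat ltac:(lia)). assert (R1 := Hr 1%nat ltac:(lia)). assert (R2 := Hr 2%nat ltac:(lia)).
cbv beta zeta.
rewrite (Hw i Hi), (HdI i Hi), !HdI, !Hda by (unfold nx, px; apply Nat.mod_upper_bound; lia).
assert (PI : 0 < Itot m x y t).
{ unfold Itot, Imom. pose proof (Rmult_lt_0_compat _ _ Pm0 R0); pose proof (Rmult_lt_0_compat _ _ Pm1 R1); pose proof (Rmult_lt_0_compat _ _ Pm2 R2); lra. }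
assert (Hx := Hcom_x t). assert (Hy := Hcom_y t).
unfold sqn in R0, R1, R2.
destruct i as [|[|[|i]]]; [| | |lia]; repeat (rewrite nx0 || rewrite nx1 || rewrite nx2 || rewrite px0 || rewrite px1 || rewrite px2); split.
- unfold Itot, Imom, angmom, sqn in *. field. lra.
- apply (key (m 0%nat) (m 1%nat) (m 2%nat) (x 0%nat t) (y 0%nat t) (x 1%nat t) (y 1%nat t) (x 2%nat t) (y 2%nat t)
     (Derive (x 0%nat) t) (Derive (y 0%nat) t) (Derive (x 1%nat) t) (Derive (y 1%nat) t) (Derive (x 2%nat) t) (Derive (y 2%nat) t)
     (area x y t) (Itot m x y t)); auto.
- unfold Itot, Imom, angmom, sqn in *. field. lra.
- replace (8 * m 0%nat * m 1%nat * m 2%nat) with (8 * m 1%nat * m 2%nat * m 0%nat) by ring.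
  apply (key (m 1%nat) (m 2%nat) (m 0%nat) (x 1%nat t) (y 1%nat t) (x 2%nat t) (y 2%nat t) (x 0%nat t) (y 0%nat t)
     (Derive (x 1%nat) t) (Derive (y 1%nat) t) (Derive (x 2%nat) t) (Derive (y 2%nat) t) (Derive (x 0%nat) t) (Derive (y 0%nat) t)
     (area x y t) (Itot m x y t)); auto; try lra; try (unfold Itot, Imom, sqn; ring); try (rewrite HA; field).
- unfold Itot, Imom, angmom, sqn in *. field. lra.
- replace (8 * m 0%nat * m 1%nat * m 2%nat) with (8 * m 2%nat * m 0%nat * m 1%nat) by ring.
  apply (key (m 2%nat) (m 0%nat) (m 1%nat) (x 2%nat t) (y 2%nat t) (x 0%nat t) (y 0%nat t) (x 1%nat t) (y 1%nat t)
     (Derive (x 2%nat) t) (Derive (y 2%nat) t) (Derive (x 0%nat) t) (Derive (y 0%nat) t) (Derive (x 1%nat) t) (Derive (y 1%nat) t)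
     (area x y t) (Itot m x y t)); auto; try lra; try (unfold Itot, Imom, sqn; ring); try (rewrite HA; field).
Qed.
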